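(* Let $A:\mathbb{R}^d\rightrightarrows\mathbb{R}^d$ be maximal monotone with $A^{-1}(0)\neq\emptyset$, let $p\geq1$ be an integer, $\sigma\in(0,1)$, $\theta>0$, $x_0\in\mathbb{R}^d\setminus A^{-1}(0)$, and suppose $\lambda_k>0$, $y_k,v_k,x_k\in\mathbb{R}^d$, $\epsilon_k\geq0$ satisfy for every $k\geq0$: $v_{k+1}\in A^{\epsilon_{k+1}}(y_{k+1})$, $\|\lambda_{k+1}v_{k+1}+y_{k+1}-x_k\|^2+2\lambda_{k+1}\epsilon_{k+1}\leq\sigma^2\|y_{k+1}-x_k\|^2$, $\lambda_{k+1}\|y_{k+1}-x_k\|^{p-1}\geq\theta$, and $x_{k+1}=x_k-\lambda_{k+1}v_{k+1}$. Then for every integer $k\geq1$, \[ \sum_{i=1}^k\lambda_i\geq\theta\left(\frac{1-\sigma^2}{\inf_{z^\star\in A^{-1}(0)}\|x_0-z^\star\|^2}\right)^{\frac{p-1}{2}}k^{\frac{p+1}{2}}. \]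
   Context: The $\epsilon$-enlargement is $A^{\epsilon}(x)=\{v\in\mathbb{R}^d:\langle x-\tilde x,v-\tilde v\rangle\geq-\epsilon\ \forall\tilde x\in\mathbb{R}^d,\ \forall\tilde v\in A\tilde x\}$. *)

(* Defs.v *)
From HB Require Import structures.
From mathcomp Require Import all_boot all_order all_algebra.
From mathcomp Require Import all_classical all_reals all_analysis.
Set Implicit Arguments. Unset Strict Implicit. Unset Printing Implicit Defensive.
Import Order.TTheory GRing.Theory Num.Theory.
Local Open Scope classical_set_scope.
Local Open Scope ring_scope.

Definition dotv (R : realType) (d : nat) (u v : 'rV[R]_d) : R :=
  \sum_(i < d) u 0 i * v 0 i.
Definition nrm (R : realType) (d : nat) (u : 'rV[R]_d) : R :=
  Num.sqrt (dotv u u).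

Definition monotone_op (R : realType) (d : nat) (A : 'rV[R]_d -> set 'rV[R]_d) :=
  forall x y u v, A x u -> A y v -> 0 <= dotv (x - y) (u - v).

Definition maximal_monotone (R : realType) (d : nat) (A : 'rV[R]_d -> set 'rV[R]_d) :=
  monotone_op A /\
  forall B : 'rV[R]_d -> set 'rV[R]_d,
    monotone_op B -> (forall x, A x `<=` B x) -> forall x, B x = A x.

Definition enlarg (R : realType) (d : nat) (A : 'rV[R]_d -> set 'rV[R]_d)
  (eps : R) (x : 'rV[R]_d) : set 'rV[R]_d :=
  [set v | forall xt vt, A xt vt -> - eps <= dotv (x - xt) (v - vt)].

Definition zeros (R : realType) (d : nat) (A : 'rV[R]_d -> set 'rV[R]_d) : set 'rV[R]_d :=
  [set z | A z 0].

(* Main.v *)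
Require Import Defs.
From HB Require Import structures.
From mathcomp Require Import all_boot all_order all_algebra.
From mathcomp Require Import all_classical all_reals all_analysis.
From mathcomp Require Import ring lra.
Import Order.TTheory GRing.Theory Num.Theory.
Local Open Scope classical_set_scope.
Local Open Scope ring_scope.

Set Implicit Arguments. Unset Strict Implicit.
Section Dot.
Variables (R : realType) (d : nat).
Implicit Types u w z : 'rV[R]_d.

Lemma dotvC u w : dotv u w = dotv w u.
Proof. by apply: eq_bigr => i _; rewrite mulrC. Qed.

Lemma dotvDl u w z : dotv (u + w) z = dotv u z + dotv w z.
Proof. by rewrite /dotv -big_split; apply: eq_bigr => i _; rewrite !mxE mulrDl. Qed.

Lemma dotvZl a u w : dotv (a *: u) w = a * dotv u w.
Proof. by rewrite /dotv mulr_sumr; apply: eq_bigr => i _; rewrite !mxE mulrA. Qed.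

Lemma dotvNl u w : dotv (- u) w = - dotv u w.
Proof. by rewrite -scaleN1r dotvZl mulN1r. Qed.

Lemma dotvBl u w z : dotv (u - w) z = dotv u z - dotv w z.
Proof. by rewrite dotvDl dotvNl. Qed.

Lemma dotvDr u w z : dotv z (u + w) = dotv z u + dotv z w.
Proof. by rewrite dotvC dotvDl !(dotvC z). Qed.
Lemma dotvBr u w z : dotv z (u - w) = dotv z u - dotv z w.
Proof. by rewrite dotvC dotvBl !(dotvC z). Qed.
Lemma dotvZr a u w : dotv w (a *: u) = a * dotv w u.
Proof. by rewrite dotvC dotvZl dotvC. Qed.

Lemma dotvNr u w : dotv w (- u) = - dotv w u.
Proof. by rewrite dotvC dotvNl dotvC. Qed.

Lemma dotv_ge0 u : 0 <= dotv u u.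
Proof. by apply: sumr_ge0 => i _; rewrite -expr2 sqr_ge0. Qed.

Lemma nrm2 u : nrm u ^+ 2 = dotv u u.
Proof. by rewrite /nrm sqr_sqrtr // dotv_ge0. Qed.

Lemma nrm_ge0 u : 0 <= nrm u.
Proof. exact: sqrtr_ge0. Qed.
End Dot.

Lemma descent (R : realType) (d : nat) (xk y v z : 'rV[R]_d) (lam eps s : R) :
  0 <= lam ->
  - eps <= dotv (y - z) (v - 0) ->
  nrm (lam *: v + y - xk) ^+ 2 + 2 * lam * eps <= s * nrm (y - xk) ^+ 2 ->
  dotv (xk - lam *: v - z) (xk - lam *: v - z) <=
  dotv (xk - z) (xk - z) - (1 - s) * dotv (y - xk) (y - xk).
Proof.
move=> hl he hs; rewrite !nrm2 in hs.
have e1 : y - z = (y - xk) + (xk - z) by rewrite addrA subrK.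
have e2 : lam *: v + y - xk = lam *: v + (y - xk) by rewrite addrA.
have e3 : xk - lam *: v - z = (xk - z) - lam *: v by rewrite addrAC.
rewrite e1 subr0 in he; rewrite e2 in hs; rewrite e3.
move: he hs; rewrite -/(dotv (y - xk) (y - xk)).
move: (y - xk) => P; move: (xk - z) => Q.
rewrite !(dotvDl, dotvBl, dotvDr, dotvBr, dotvZl, dotvZr, dotvNl, dotvNr).
rewrite (dotvC P v) (dotvC Q v).
move=> he hs.
have h2 : 0 <= 2 * lam by lra.
have := ler_wpM2l h2 he.
lra.
Qed.

Lemma amgm (R : realType) (n : nat) (s : R) : 0 < s ->
  n.+2%:R * s ^+ n <= 2 + n%:R * s ^+ n.+2.
Proof.
move=> s0; elim: n => [|n IH]; first by rewrite !expr0 mul0r addr0 mulr1.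
have key : 0 <= (1 - s) * (2 - s ^+ n.+1 * (1 + s)).
  have [s1|s1] := lerP s 1.
    have h1 : s ^+ n.+1 <= 1 by apply: exprn_ile1 => //; exact: ltW.
    have h0 : 0 <= s ^+ n.+1 by apply: exprn_ge0; exact: ltW.
    apply: mulr_ge0; first lra.
    nra.
  have h1 : 1 <= s ^+ n.+1 by apply: exprn_ege1; exact: ltW.
  apply: mulr_le0; first lra.
  nra.
have IH' := ler_wpM2l (ltW s0) IH.
rewrite !exprS in IH' key *.
rewrite -!natr1 in IH' *.
nra.
Qed.

Lemma powconv (R : realType) (r : R) (n k : nat) : 0 <= r -> (1 <= k)%N ->
  r `^ (n%:R / 2) * k%:R `^ ((n%:R + 2) / 2) = k%:R * Num.sqrt (r * k%:R) ^+ n.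
Proof.
move=> r0 k1.
have k0 : 0 < k%:R :> R by rewrite ltr0n.
have rk0 : 0 <= r * k%:R by apply: mulr_ge0 => //; apply: ltW.
rewrite -powR12_sqrt // -powR_mulrn ?powR_ge0 // -powRrM powRM //.
have -> : (n%:R + 2) / 2 = 2^-1 * n%:R + 1 :> R by field.
rewrite powRD; last by apply/implyP => _; rewrite gt_eqF.
rewrite powRr1; last exact: ler0n.
rewrite (mulrC (n%:R) (2^-1)).
ring.
Qed.

Unset Implicit Arguments. Set Strict Implicit.
Theorem lemma4p3 (R : realType) (d : nat) (A : 'rV[R]_d -> set 'rV[R]_d)
  (p : nat) (sigma theta : R)
  (lambda : nat -> R) (y v x : nat -> 'rV[R]_d) (eps : nat -> R) :
  maximal_monotone A ->
  zeros A !=set0 ->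
  (1 <= p)%N ->
  0 < sigma < 1 ->
  0 < theta ->
  ~ zeros A (x 0%N) ->
  (forall k, (1 <= k)%N -> 0 < lambda k) ->
  (forall k, (1 <= k)%N -> 0 <= eps k) ->
  (forall k : nat,
      enlarg A (eps k.+1) (y k.+1) (v k.+1) /\
      nrm (lambda k.+1 *: v k.+1 + y k.+1 - x k) ^+ 2
        + 2 * lambda k.+1 * eps k.+1
        <= sigma ^+ 2 * nrm (y k.+1 - x k) ^+ 2 /\
      theta <= lambda k.+1 * nrm (y k.+1 - x k) ^+ (p - 1) /\
      x k.+1 = x k - lambda k.+1 *: v k.+1) ->
  forall k : nat, (1 <= k)%N ->
    \sum_(1 <= i < k.+1) lambda i >=
    theta * ((1 - sigma ^+ 2) /
              inf [set nrm (x 0%N - z) ^+ 2 | z in zeros A])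
            `^ ((p%:R - 1) / 2)
          * k%:R `^ ((p%:R + 1) / 2).
Proof.
move=> _ [z0 Hz0] p1 /andP[s0 s1] th0 _ lam0 _ H k k1.
set D := inf _.
have Hdesc : forall z, zeros A z -> forall j,
  (1 - sigma ^+ 2) * \sum_(i < j) nrm (y i.+1 - x i) ^+ 2
    <= dotv (x 0%N - z) (x 0%N - z) - dotv (x j - z) (x j - z).
  move=> z Hz; elim=> [|j IH]; first by rewrite big_ord0 mulr0 subrr.
  have [He [Hs [_ Hx]]] := H j.
  rewrite big_ord_recr /= mulrDr Hx.
  have := descent (ltW (lam0 j.+1 isT)) (He z 0 Hz) Hs.
  rewrite nrm2; lra.
have HD : (1 - sigma ^+ 2) * \sum_(i < k) nrm (y i.+1 - x i) ^+ 2 <= D.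
  apply: lb_le_inf; first by exists (nrm (x 0%N - z0) ^+ 2); exists z0.
  move=> _ [z Hz <-]; rewrite nrm2.
  have := Hdesc z Hz k; have := dotv_ge0 (x k - z); lra.
have sg : 0 < 1 - sigma ^+ 2 by nra.
have sa0 : 0 <= \sum_(i < k) nrm (y i.+1 - x i) ^+ 2.
  by apply: sumr_ge0 => i _; apply: sqr_ge0.
have D0 : 0 <= D by nra.
set r := (1 - sigma ^+ 2) / D.
have r0 : 0 <= r by apply: divr_ge0 => //; lra.
rewrite big_add1 big_mkord /=.
rewrite -(prednK p1) -natr1 addrK -addrA (_ : 1 + 1 = 2) //.
rewrite -mulrA powconv //.
have k0 : 0 < k%:R :> R by rewrite ltr0n.
rewrite subn1 in H.
move: (p.-1) H => [|n] H.
  rewrite expr0 mulr1.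
  have : \sum_(i < k) theta <= \sum_(i < k) lambda i.+1.
    apply: ler_sum => i _; have [_ [_ [h _]]] := H i; by rewrite expr0 mulr1 in h.
  move=> h; apply: le_trans h; rewrite sumr_const card_ord -[in X in _ <= X]mulr_natr. lra.
set a := fun i => nrm (y i.+1 - x i).
have apos : forall i, 0 < a i.
  move=> i; rewrite lt_neqAle nrm_ge0 andbT; apply/eqP => h.
  have [_ [_ [hh _]]] := H i; rewrite -/(a i) -h expr0n /= mulr0 in hh; lra.
have Sa : 0 < \sum_(i < k) a i ^+ 2.
  rewrite -(prednK k1) big_ord_recl /=.
  have := exprn_gt0 2 (apos 0%N).
  have : 0 <= \sum_(i < k.-1) a (bump 0 i) ^+ 2 by apply: sumr_ge0 => i _; apply: sqr_ge0.
  lra.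
have HD' : (1 - sigma ^+ 2) * \sum_(i < k) a i ^+ 2 <= D := HD.
have Dpos : 0 < D by have := mulr_gt0 sg Sa; lra.
have rpos : 0 < r by apply: divr_gt0.
set c := Num.sqrt (r * k%:R).
have c0 : 0 < c by rewrite sqrtr_gt0 mulr_gt0.
have c2 : c ^+ 2 = r * k%:R by rewrite sqr_sqrtr // ltW // mulr_gt0.
have per : forall i, n.+3%:R * c ^+ n.+1 - n.+1%:R * c ^+ n.+3 * a i ^+ 2
    <= 2 * (a i ^+ n.+1)^-1.
  move=> i; have ai := apos i; have u0 : 0 < a i ^+ n.+1 := exprn_gt0 _ ai.
  rewrite ler_pdivlMr //.
  have := amgm n.+1 (mulr_gt0 ai c0); rewrite !exprMn.
  have e : a i ^+ n.+3 = a i ^+ n.+1 * a i ^+ 2 by rewrite -exprD addn2.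
  rewrite e.
  lra.
have lam_ge : forall i, theta * (a i ^+ n.+1)^-1 <= lambda i.+1.
  move=> i; have [_ [_ [h _]]] := H i.
  by rewrite ler_pdivrMr // exprn_gt0.
have S1 : theta * \sum_(i < k) (a i ^+ n.+1)^-1 <= \sum_(i < k) lambda i.+1.
  by rewrite mulr_sumr; apply: ler_sum => i _; exact: lam_ge.
have S2 : \sum_(i < k) (n.+3%:R * c ^+ n.+1 - n.+1%:R * c ^+ n.+3 * a i ^+ 2)
    <= 2 * \sum_(i < k) (a i ^+ n.+1)^-1.
  by rewrite mulr_sumr; apply: ler_sum => i _; exact: per.
have ek : forall z : R, z *+ k = z * k%:R by move=> z; rewrite mulr_natr.
rewrite sumrB sumr_const card_ord -mulr_sumr ek in S2.
have rS : r * \sum_(i < k) a i ^+ 2 <= 1.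
  by rewrite /r mulrAC ler_pdivrMr // mul1r.
have e3 : c ^+ n.+3 = c ^+ n.+1 * (r * k%:R) by rewrite -c2 -exprD addn2.
have e4 : n.+3%:R = n.+1%:R + 2 :> R by rewrite -addn2 natrD.
rewrite e3 e4 in S2.
have P0 : 0 <= n.+1%:R * (c ^+ n.+1 * k%:R).
  by apply: mulr_ge0 => //; apply: mulr_ge0; [apply: exprn_ge0; apply: ltW|].
have := ler_wpM2l P0 rS.
move=> hh.
have W : k%:R * c ^+ n.+1 <= \sum_(i < k) (a i ^+ n.+1)^-1 by lra.
have := ler_wpM2l (ltW th0) W.
lra.
Qed.
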